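(* Let $u,\gamma>0$, $s>0$, $\nu_0\in(0,1)$ and $\nu_1=1-\nu_0$, and let $F(y)=-y(1-y)[s+\gamma(1-y)]+u\nu_1(1-y)-u\nu_0y$. If $u<s$ or $\gamma<s$, then $F$ has exactly one root in $[0,1]$. *)

(* Defs.v *)
From Stdlib Require Import Reals.
Open Scope R_scope.

Definition F (u gamma s nu0 y : R) : R :=
  let nu1 := 1 - nu0 in
  - y * (1 - y) * (s + gamma * (1 - y)) + u * nu1 * (1 - y) - u * nu0 * y.

(* Main.v *)
Require Import Defs.
From Stdlib Require Import Reals Lra Psatz.
Open Scope R_scope.

Lemma no_two (u gamma s nu0 a b : R) :
  0 < u -> 0 < gamma -> 0 < s -> 0 < nu0 < 1 ->
  (u < s \/ gamma < s) -> 0 <= a -> a < b -> b <= 1 ->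
  F u gamma s nu0 a = 0 -> F u gamma s nu0 b = 0 -> False.
Proof.
  unfold F. intros Hu Hg Hs [H0 H1] Hc Ha Hab Hb Fa Fb.
  set (Q := fun x y => -gamma*(x*x+x*y+y*y)+(s+2*gamma)*(x+y)-(s+gamma+u)).
  assert (E1 : forall x y, (- x * (1 - x) * (s + gamma * (1 - x)) + u * (1-nu0) * (1 - x) - u * nu0 * x)
     - (- y * (1 - y) * (s + gamma * (1 - y)) + u * (1-nu0) * (1 - y) - u * nu0 * y) = (x-y)*Q x y).
  { intros; unfold Q; ring. }
  assert (b1 : b < 1).
  { destruct (Req_dec b 1) as [->|]; [|lra]. exfalso. nra. }
  assert (Qab : Q a b = 0).
  { pose proof (E1 a b) as E. rewrite Fa, Fb in E.
    assert (a - b <> 0) by lra.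
    apply (Rmult_eq_reg_l (a-b)); lra. }
  assert (Qb1 : Q b 1 < 0).
  { pose proof (E1 b 1) as E. rewrite Fb in E.
    assert (Q b 1 * (b-1) = u*nu0) by (rewrite Rmult_comm, <- E; ring).
    assert (u*nu0 > 0) by nra.
    destruct (Rlt_or_le (Q b 1) 0); auto. exfalso. nra. }
  unfold Q in Qab, Qb1.
  destruct Hc as [Hc|Hc].
  - set (Fpb := -3*gamma*b*b + 2*(s+2*gamma)*b - (s+gamma+u)).
    set (Fp1 := -3*gamma*1*1 + 2*(s+2*gamma)*1 - (s+gamma+u)).
    assert (HFp1 : Fp1 > 0) by (unfold Fp1; lra).
    assert (T : (-gamma*(b*b+b*1+1*1)+(s+2*gamma)*(b+1)-(s+gamma+u)) - (Fpb + Fp1)/2 = gamma*(1-b)*(1-b)/2) by (unfold Fpb, Fp1; field).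
    assert (gamma*(1-b)*(1-b)/2 >= 0).
    { assert (0 <= (1-b)*(1-b)) by nra. nra. }
    assert (HFpb : Fpb < 0) by lra.
    set (Fpp := -6*gamma*b + 2*s + 4*gamma).
    assert (D : Fp1 - Fpb = (1-b)*(-3*gamma*(1+b)+2*(s+2*gamma))) by (unfold Fp1, Fpb; ring).
    assert (K : -3*gamma*(1+b)+2*(s+2*gamma) > 0).
    { destruct (Rlt_or_le 0 (-3*gamma*(1+b)+2*(s+2*gamma))); auto. exfalso.
      assert (0 <= (1-b)*(-(-3*gamma*(1+b)+2*(s+2*gamma)))) by (apply Rmult_le_pos; lra). lra. }
    assert (Fpp > 0) by (unfold Fpp; nra).
    assert (T2 : -gamma*(a*a+a*b+b*b)+(s+2*gamma)*(a+b)-(s+gamma+u)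
              = Fpb + Fpp*(a-b)/2 - gamma*(a-b)*(a-b)) by (unfold Fpb, Fpp; field).
    assert (Fpp*(a-b)/2 < 0).
    { assert (Fpp*(b-a) > 0) by (apply Rmult_lt_0_compat; lra). lra. }
    assert (gamma*(a-b)*(a-b) >= 0).
    { assert (0 <= (a-b)*(a-b)) by nra. nra. }
    lra.
  - assert (Z : (-gamma*(a*a+a*b+b*b)+(s+2*gamma)*(a+b)-(s+gamma+u))
             - (-gamma*(b*b+b*1+1*1)+(s+2*gamma)*(b+1)-(s+gamma+u))
             = (a-1)*(s+2*gamma - gamma*(a+b+1))) by ring.
    assert (gamma*(a+b+1) < gamma*3) by (apply Rmult_lt_compat_l; lra).
    assert (0 < (1-a)*(s+2*gamma - gamma*(a+b+1))) by (apply Rmult_lt_0_compat; lra).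
    lra.
Qed.

Theorem proposition3p2 (u gamma s nu0 : R) :
  0 < u -> 0 < gamma -> 0 < s -> 0 < nu0 < 1 ->
  (u < s \/ gamma < s) ->
  exists! y : R, 0 <= y <= 1 /\ F u gamma s nu0 y = 0.
Proof.
  intros Hu Hg Hs Hn Hc.
  assert (Hcont : continuity (fun y => - F u gamma s nu0 y)).
  { unfold F. reg. }
  destruct (IVT (fun y => - F u gamma s nu0 y) 0 1 Hcont ltac:(lra)) as [z [Hz Fz]].
  { unfold F. nra. }
  { unfold F. nra. }
  exists z. split. { split; [lra|]. lra. }
  intros y [Hy Fy].
  destruct (Rtotal_order z y) as [H|[H|H]]; auto; exfalso.
  - apply (no_two u gamma s nu0 z y); auto; lra.
  - apply (no_two u gamma s nu0 y z); auto; lra.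
Qed.
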